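(* Let $n>2$ and $k\ge 2n-1$ be integers. Suppose that $A$ is a set of $k$ integers satisfying $$|S_n(A)|=(k-1)n-3\binom n2+1=kn-\tfrac 32 n^2+\tfrac n2+1.$$ Then $A$ contains at least $n-1$ negative integers and also at least $n-1$ positive integers.
   Context: For a finite set $A\subseteq\mathbb Z$ and a positive integer $n$, define $$S_n(A)=\{a_1+\cdots+a_n:\ a_1,\ldots,a_n\in A,\ \text{and}\ a_i^2\neq a_j^2\ \text{for}\ 1\le i<j\le n\}.$$ *)

(* Defs.v *)
From HB Require Import structures.
From mathcomp Require Import all_boot all_order all_algebra.
From mathcomp Require Import finmap.
Set Implicit Arguments. Unset Strict Implicit. Unset Printing Implicit Defensive.
Import Order.TTheory GRing.Theory Num.Theory.
Local Open Scope fset_scope.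

Definition sq_distinct (n : nat) (A : {fset int}) (f : {ffun 'I_n -> A}) : bool :=
  [forall i : 'I_n, forall j : 'I_n,
     (i < j)%N ==> ((fsval (f i) ^+ 2)%R != (fsval (f j) ^+ 2)%R)].

Definition Sn (n : nat) (A : {fset int}) : {fset int} :=
  [fset (fun f : {ffun 'I_n -> A} => \sum_(i < n) fsval (f i))%R f
     | f in [pred f : {ffun 'I_n -> A} | sq_distinct f]].

(* Main.v *)
Require Import Defs.
From HB Require Import structures.
From mathcomp Require Import all_boot all_order all_algebra.
From mathcomp Require Import finmap zify.
Import Order.TTheory GRing.Theory Num.Theory.
Local Open Scope fset_scope.
Local Open Scope ring_scope.

Definition valid (B : {fset int}) : Prop :=
  forall x y, x \in B -> y \in B -> x + y = 0 -> x = y.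
Definition fsum (B : {fset int}) : int := \sum_(b <- B) b.

Lemma sqr_eq_valid (a b : int) : a + b = 0 -> a ^+ 2 = b ^+ 2.
Proof. move=> h; have -> : a = - b by lia.
by rewrite sqrrN. Qed.
Arguments sqr_eq_valid {a b}.

Lemma SnP n A x : x \in Sn n A <->
  exists B, [/\ B `<=` A, #|` B|%N = n, valid B & x = fsum B].
Proof.
split.
- case/imfsetP => /= f sqd ->.
  move: sqd; rewrite /= => /forallP sqd.
  have finj : injective (fun i => fsval (f i)).
    move=> i j eij; case: (ltngtP i j) => lij; last by apply/val_inj.
    + by move: (sqd i) => /forallP /(_ j); rewrite lij /= eij eqxx.
    + by move: (sqd j) => /forallP /(_ i); rewrite lij /= eij eqxx.
  set s := [seq fsval (f i) | i <- enum 'I_n].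
  have us : uniq s by rewrite (map_inj_uniq finj) enum_uniq.
  exists (seq_fset tt s); split.
  + apply/fsubsetP => y; rewrite seq_fsetE => /mapP [i _ ->]; exact: fsvalP.
  + by rewrite size_seq_fset undup_id // size_map size_enum_ord.
  + move=> y z; rewrite !seq_fsetE => /mapP [i _ ->] /mapP [j _ ->] h.
    case: (ltngtP i j) => lij.
    * by move: (sqd i) => /forallP /(_ j); rewrite lij /= (sqr_eq_valid h) eqxx.
    * by move: (sqd j) => /forallP /(_ i); rewrite lij /= -(sqr_eq_valid h) eqxx.
    * by have -> : i = j by apply/val_inj.
  + rewrite /fsum (perm_big _ (seq_fset_perm _ _)) undup_id // big_map.
    by rewrite big_enum.
- case=> B [sub cB vB ->].
  set s := enum_fset B.
  have Hin : forall i : 'I_n, nth 0 s i \in A.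
    move=> i; apply: (fsubsetP sub); apply: mem_nth.
    by rewrite -/(size s) /s cB.
  apply/imfsetP; exists [ffun i : 'I_n => [` Hin i]].
  + rewrite /=; apply/forallP => i; apply/forallP => j; apply/implyP => lij.
    rewrite !ffunE /=; apply/negP; rewrite eqf_sqr => /orP [/eqP e | /eqP e].
    * move/eqP: e; rewrite nth_uniq ?fset_uniq //.
      - by move/eqP => eij; move: lij; rewrite eij ltnn.
      - by rewrite /s cB.
      - by rewrite /s cB.
    * have e2 : nth 0 s i = nth 0 s j.
        apply: vB; try (apply: mem_nth; by rewrite /s cB). by rewrite e addNr.
      move/eqP: e2; rewrite nth_uniq ?fset_uniq ?/s ?cB //.
      by move/eqP => eij; move: lij; rewrite eij ltnn.
  + rewrite /= /fsum (big_nth 0) -/s.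
    have -> : size s = n by rewrite /s cB.
    by rewrite big_mkord; apply: eq_bigr => i _; rewrite ffunE.
Qed.

Lemma swapP {B : {fset int}} {z y} : valid B -> z \in B -> y \notin B -> - y \notin B `\ z ->
  [/\ valid (y |` (B `\ z)), #|` y |` (B `\ z)| = #|` B| &
      fsum (y |` (B `\ z)) = fsum B - z + y].
Proof.
move=> vB zB yB nyB; split.
- move=> a b; rewrite !inE => /orP [/eqP -> | /andP [az aB]] /orP [/eqP -> | /andP [bz bB]] h //.
  + have : b = - y by lia.
    by move=> e; move: nyB; rewrite !inE -e bz bB.
  + have : a = - y by lia.
    by move=> e; move: nyB; rewrite !inE -e az aB.
  + exact: vB.
- have yB' : y \notin B `\ z by rewrite !inE negb_and yB orbT.
  by rewrite cardfsU1 yB' (cardfsD1 z B) zB.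
- have yB' : y \notin B `\ z by rewrite !inE negb_and yB orbT.
  rewrite /fsum big_fsetU1 //= (big_fsetD1 z zB) /=. lia.
Qed.

Lemma exists_extreme (X : {fset int}) (e : int) : X != fset0 ->
  exists2 s, s \in X & forall x, x \in X -> e * x <= e * s.
Proof.
rewrite -cardfs_gt0.
have : forall s : seq int, (0 < size s)%N -> exists2 m, m \in s & forall x, x \in s -> e * x <= e * m.
  elim=> [//|a t IH] _; case: t IH => [|b t] IH.
    by exists a; rewrite ?inE // => x; rewrite inE => /eqP ->.
  case: (IH isT) => m mt hm.
  case: (lerP (e * a) (e * m)) => h.
    exists m; first by rewrite inE mt orbT.
    by move=> x; rewrite inE => /orP [/eqP -> // | /hm].
  exists a; first by rewrite inE eqxx.
  move=> x; rewrite inE => /orP [/eqP -> // | /hm]. move=> h2; lia.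
move=> H /H [m mX hm]; exists m => //.
Qed.

Lemma Sn_mono n (A A' : {fset int}) : A' `<=` A -> Sn n A' `<=` Sn n A.
Proof.
move=> sub; apply/fsubsetP => x /SnP [B [sB cB vB ->]]; apply/SnP.
exists B; split => //; exact: fsubset_trans sB sub.
Qed.

Lemma gain (X N Y : {fset int}) : X `<=` Y -> N `<=` Y ->
  (forall x, x \in N -> x \notin X) -> (#|` X| + #|` N| <= #|` Y|)%N.
Proof.
move=> sX sN dis.
have -> : (#|` X| + #|` N| = #|` X `|` N|)%N.
  rewrite -cardfsUI.
  have -> : X `&` N = fset0.
    apply/fsetP => x; rewrite !inE; apply/negP => /andP [xX xN].
    by move: (dis x xN); rewrite xX.
  by rewrite cardfs0 addn0.
apply: fsubset_leq_card; by rewrite fsubUset sX sN.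
Qed.

Lemma step {n} {A' : {fset int}} {w e} : w \notin A' -> - w \notin A' ->
  (forall b, b \in A' -> e * b < e * w) -> Sn n A' != fset0 ->
  exists N : {fset int}, [/\ #|` N| = n, N `<=` Sn n (w |` A') &
    forall x y, x \in N -> y \in Sn n A' -> e * y < e * x].
Proof.
move=> wA nwA ext ne.
case: (@exists_extreme _ e ne) => s0 s0S hs0.
case/SnP: s0S => B [sB cB vB s0E].
exists ((fun b => s0 - b + w) @` B); split.
- rewrite card_imfset /=; first by rewrite -cB.
  move=> a b /= h; lia.
- apply/fsubsetP => x /imfsetP [b /= bB ->]; apply/SnP.
  have wB : w \notin B by apply: contra wA; apply: (fsubsetP sB).
  have nwB : - w \notin B `\ b.
    by apply: contra nwA; rewrite inE => /andP [_]; apply: (fsubsetP sB).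
  case: (swapP vB bB wB nwB) => v1 c1 s1.
  exists (w |` (B `\ b)); split => //; last by rewrite s1 s0E.
  + apply: fsetUS; apply: fsubset_trans sB; exact: fsubsetDl.
  + by rewrite c1.
- move=> x y /imfsetP [b /= bB ->] yS.
  have h1 := hs0 y yS; have h2 := ext b (fsubsetP sB b bB).
  rewrite mulrDr mulrBr; lia.
Qed.

Definition D (A : {fset int}) := [fset x in A | (0 < x) && (- x \in A)].

Lemma star {n A z C} : Sn n (A `\ z `\ - z) = fset0 -> C `<=` A -> #|` C| = n ->
  valid C -> forall y, y \in A -> y \in C \/ - y \in C.
Proof.
move=> emp sC cC vC y yA.
have [z' z'C hz'] : exists2 z', z' \in C & (z' = z \/ z' = - z).
  case: (boolP (z \in C)) => zC; first by exists z; auto.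
  case: (boolP (- z \in C)) => nzC; first by exists (- z); auto.
  exfalso; have : fsum C \in Sn n (A `\ z `\ - z).
    apply/SnP; exists C; split => //; apply/fsubsetP => t tC; rewrite !inE.
    rewrite (fsubsetP sC t tC) andbT; apply/andP; split.
    + by apply: contraNneq nzC => <-.
    + by apply: contraNneq zC => <-.
  by rewrite emp inE.
case: (boolP (y \in C)) => yC; first by left.
case: (boolP (- y \in C)) => nyC; first by right.
exfalso.
have nyC' : - y \notin C `\ z' by rewrite inE negb_and nyC orbT.
case: (swapP vC z'C yC nyC') => v1 c1 s1.
have key : forall t, ((t != z) && (t != - z)) = ((t != z') && (t != - z')).
  move=> t; case: hz' => ->; first by [].
  by rewrite opprK andbC.
have : fsum (y |` (C `\ z')) \in Sn n (A `\ z `\ - z).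
  apply/SnP; exists (y |` (C `\ z')); split => //; last by rewrite c1.
  apply/fsubsetP => t /fset1UP [-> | ].
  - rewrite !inE yA andbT andbC key; apply/andP; split.
    + by apply: contraNneq yC => ->.
    + by apply: contraNneq nyC => ->; rewrite opprK.
  - move/fsetD1P => [tz' tC].
    rewrite !inE (fsubsetP sC t tC) andbT andbC key tz' /=.
    apply/eqP => e; move/eqP: tz'; apply; apply: vC => //; rewrite e; lia.
by rewrite emp inE.
Qed.

Lemma DP A x : reflect [/\ x \in A, 0 < x & - x \in A] (x \in D A).
Proof.
rewrite /D !inE /=; apply: (iffP idP).
- by case/andP => -> /andP [-> ->].
- by case=> -> -> ->.
Qed.

Lemma inner_gain {n A z v} : Sn n (A `\ z `\ - z) = fset0 -> Sn n A != fset0 ->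
  v \in D A -> (forall x, x \in D A -> x <= v) ->
  Sn n (A `\ - v) != fset0 /\ (#|` Sn n (A `\ - v)| + #|` D A| <= #|` Sn n A|)%N.
Proof.
move=> emp ne /DP [vA v0 nvA] vmax.
have ne' : Sn n (A `\ - v) != fset0.
  case/fset0Pn: ne => x /SnP [B [sB cB vB _]].
  apply/fset0Pn; case: (boolP (- v \in B)) => nvB.
  - have vB' : v \notin B.
      apply/negP => vB'; have := vB _ _ vB' nvB (addrN v); clear -v0; lia.
    have h2 : - v \notin B `\ - v by rewrite fsetD11.
    have h3 : - - v \notin B `\ - v by rewrite opprK inE negb_and vB' orbT.
    case: (swapP vB nvB vB' h2) => v1 c1 s1.
    exists (fsum (v |` (B `\ - v))); apply/SnP; exists (v |` (B `\ - v)); split => //; last by rewrite c1.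
    apply/fsubsetP => t /fset1UP [-> | /fsetD1P [tn tB]]; rewrite !inE.
    + rewrite vA andbT; apply/eqP; clear -v0; lia.
    + by rewrite tn (fsubsetP sB t tB).
  - exists (fsum B); apply/SnP; exists B; split => //.
    apply/fsubsetP => t tB; rewrite !inE (fsubsetP sB t tB) andbT.
    by apply: contraNneq nvB => <-.
split => //.
case: (@exists_extreme _ (-1) ne') => s0 s0S hs0.
case/SnP: s0S => C [sC cC vC s0E].
have sCA : C `<=` A by apply: fsubset_trans sC (fsubsetDl _ _).
have st := star emp sCA cC vC.
have nvC : - v \notin C by apply/negP => /(fsubsetP sC); rewrite !inE eqxx.
have vC' : v \in C by case: (st v vA) => //; rewrite (negbTE nvC).
have minC : forall B, B `<=` A `\ - v -> #|` B| = n -> valid B -> s0 <= fsum B.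
  move=> B sB cB vB; have : fsum B \in Sn n (A `\ - v) by apply/SnP; exists B.
  move/hs0 => h; clear -h; lia.
have negC : forall x, x \in D A -> x != v -> - x \in C.
  move=> x /DP [xA x0 nxA] xv; case: (st x xA) => // xC.
  apply/negPn/negP => nxC.
  have h3 : - - x \notin C `\ x by rewrite opprK fsetD11.
  case: (swapP vC xC nxC h3) => v1 c1 s1.
  have sub : - x |` (C `\ x) `<=` A `\ - v.
    apply/fsubsetP => t /fset1UP [-> | /fsetD1P [tn tC]].
    * by rewrite !inE nxA andbT (inj_eq oppr_inj).
    * exact: (fsubsetP sC).
  have := minC _ sub; rewrite c1 s1 -s0E => /(_ cC v1) h; clear -h x0; lia.
have h3 : - - v \notin C `\ v by rewrite opprK fsetD11.
case: (swapP vC vC' nvC h3) => v0' c0 s0'.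
pose C0 := - v |` (C `\ v).
have sC0 : C0 `<=` A.
  apply/fsubsetP => t /fset1UP [-> // | /fsetD1P [_ tC]]; exact: (fsubsetP sCA).
pose N := (fun x => s0 - 2 * v + 2 * x) @` ((0:int) |` (D A `\ v)).
have cN : #|` N| = #|` D A|.
  rewrite card_imfset /=; last by move=> a b /= h; clear -h; lia.
  have -> : (size (enum_fset ((0:int) |` (D A `\ v))) = #|` (0:int) |` (D A `\ v)|)%N by [].
  have vD : v \in D A by apply/DP; split.
  rewrite cardfsU1 (cardfsD1 v (D A)) vD.
  have -> : (0:int) \in D A `\ v = false.
    by apply/negP => /fsetD1P [_ /DP [_ h _]]; move: h; rewrite ltxx.
  by [].
rewrite -cN; apply: gain.
- by apply: Sn_mono; exact: fsubsetDl.
- apply/fsubsetP => y /imfsetP [x /= /fset1UP hx ->]; apply/SnP.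
  case: hx => [-> | /fsetD1P [xv xD]].
  + exists C0; split => //; last by rewrite s0' -s0E; clear; lia.
    by rewrite c0.
  + have [xA x0 nxA] := DP _ _ xD.
    have nxC : - x \in C by apply: negC.
    have nxC0 : - x \in C0 by rewrite /C0 !inE nxC andbT; apply/orP; right;
      apply/eqP; clear -x0 v0; lia.
    have xC0 : x \notin C0.
      rewrite /C0 !inE negb_or; apply/andP; split; first by apply/eqP; clear -x0 v0; lia.
      rewrite negb_and; apply/orP; right; apply/negP => xC.
      have := vC _ _ xC nxC (addrN x); clear -x0; lia.
    have h4 : - x \notin C0 `\ - x by rewrite fsetD11.
    case: (swapP v0' nxC0 xC0 h4) => v2 c2 s2.
    exists (x |` (C0 `\ - x)); split => //.
    * apply/fsubsetP => t /fset1UP [-> // | /fsetD1P [_ tC]]; exact: (fsubsetP sC0).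
    * by rewrite c2 c0.
    * rewrite s2 s0' -s0E; clear; lia.
- move=> y /imfsetP [x /= hx ->]; apply/negP => /hs0.
  case/fset1UP: hx => [-> | /fsetD1P [xv xD]]; first by move=> h; clear -h v0; lia.
  have := vmax x xD; move: xv => /eqP xv h1 h2; clear -xv h1 h2 v0; lia.
Qed.

Lemma outer_gain {n A z e} : z \in A -> - z \notin A `\ z ->
  (forall b, b \in A `\ z -> e * b < e * z) -> Sn n (A `\ z) != fset0 ->
  (#|` Sn n (A `\ z)| + n <= #|` Sn n A|)%N.
Proof.
move=> zA nz ext ne.
have zA' : z \notin A `\ z by rewrite fsetD11.
case: (step zA' nz ext ne) => N [cN sN hN].
rewrite -{2}cN; apply: gain.
- by apply: Sn_mono; exact: fsubsetDl.
- by rewrite -{1}(fsetD1K zA).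
- move=> x xN; apply/negP => xS; have := hN _ _ xN xS; rewrite ltxx //.
Qed.

Lemma pair_gain {n A w} : w \in A -> 0 < w -> - w \in A ->
  (forall b, b \in A `\ w `\ - w -> - w < b < w) -> Sn n (A `\ w `\ - w) != fset0 ->
  (#|` Sn n (A `\ w `\ - w)| + 2 * n <= #|` Sn n A|)%N.
Proof.
move=> wA w0 nwA ext ne.
set A2 := A `\ w `\ - w.
have wA2 : w \notin A2 by rewrite !inE eqxx andbF.
have nwA2 : - w \notin A2 by rewrite !inE eqxx.
have ext1 : forall b, b \in A2 -> 1 * b < 1 * w.
  by move=> b /ext /andP [_ h]; rewrite !mul1r.
have ext2 : forall b, b \in A2 -> -1 * b < -1 * (- w).
  by move=> b /ext /andP [h _]; rewrite !mulN1r opprK ltrNl.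
have nnwA2 : - - w \notin A2 by rewrite opprK.
case: (step wA2 nwA2 ext1 ne) => N1 [c1 s1 h1].
case: (step nwA2 nnwA2 ext2 ne) => N2 [c2 s2 h2].
have sub1 : w |` A2 `<=` A.
  apply/fsubsetP => t /fset1UP [-> // | ]; rewrite !inE => /andP [_ /andP [_ ->]] //.
have sub2 : - w |` A2 `<=` A.
  apply/fsubsetP => t /fset1UP [-> // | ]; rewrite !inE => /andP [_ /andP [_ ->]] //.
have g1 : (#|` Sn n A2| + #|` N1| <= #|` Sn n A2 `|` N1|)%N.
  apply: gain; [exact: fsubsetUl | exact: fsubsetUr |].
  by move=> x xN; apply/negP => xS; have := h1 _ _ xN xS; rewrite ltxx.
have g2 : (#|` Sn n A2 `|` N1| + #|` N2| <= #|` Sn n A|)%N.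
  apply: gain.
  - rewrite fsubUset; apply/andP; split; first by apply: Sn_mono;
      apply: fsubset_trans (fsubsetU1 w A2) sub1.
    apply: fsubset_trans s1 (@Sn_mono n _ _ sub1).
  - apply: fsubset_trans s2 (@Sn_mono n _ _ sub2).
  - move=> x xN; rewrite inE negb_or; apply/andP; split.
    + by apply/negP => xS; have := h2 _ _ xN xS; rewrite ltxx.
    + apply/negP => xN1; case/fset0Pn: ne => y yS.
      have := h1 _ _ xN1 yS; have := h2 _ _ xN yS; rewrite !mul1r !mulN1r => ha hb.
      clear -ha hb; lia.
move: g1 g2; rewrite c1 c2 => g1 g2; clear -g1 g2; lia.
Qed.
Lemma gmono {n c1 c2} : (c1 <= c2 <= n)%N -> (c2 * c2.+1 + 2 * n * c1 <= c1 * c1.+1 + 2 * n * c2)%N.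
Proof.
case/andP => h1 h2.
have [d e] : exists d, c2 = (c1 + d)%N by exists (c2 - c1)%N; lia.
subst c2.
case: d h1 h2 => [|d] h1 h2; first by lia.
have h3 : (2*c1 + d + 2 <= 2*n)%N by lia.
have := leq_mul (leqnn d.+1) h3. nia.
Qed.
Lemma ar_outer {n K S S' c c'} : (c' <= c <= n)%N -> (S' + n <= S)%N ->
 (2*n*K + 2 + c' * c'.+1 <= 2 * S' + 2*n*n + 2*n*c')%N ->
 (2*n*K.+1 + 2 + c * c.+1 <= 2 * S + 2*n*n + 2*n*c)%N.
Proof. move=> h1 h2 h3; have := gmono h1. lia. Qed.
Lemma ar_inner n K' S S' c c' : (c'.+1 <= c <= n)%N -> (S' + c <= S)%N ->
 (2*n*K' + 2 + c' * c'.+1 <= 2 * S' + 2*n*n + 2*n*c')%N ->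
 (2*n*K'.+1 + 2 + c * c.+1 <= 2 * S + 2*n*n + 2*n*c)%N.
Proof.
case: c => [|m] h1 h2 h3; first by lia.
have h4 : (c' <= m <= n)%N by lia.
have := gmono h4.
have e : (m.+1 * m.+2 = m * m.+1 + 2 * m.+1)%N by rewrite mulnC; rewrite !mulSn; lia.
lia.
Qed.
Lemma ar_pair {n K'' S S' c c'} : (c'.+1 <= c <= n)%N -> (S' + 2 * n <= S)%N ->
 (2*n*K'' + 2 + c' * c'.+1 <= 2 * S' + 2*n*n + 2*n*c')%N ->
 (2*n*K''.+2 + 2 + c * c.+1 <= 2 * S + 2*n*n + 2*n*c)%N.
Proof.
move=> h1 h2 h3; have h4 : (c' <= c <= n)%N by lia.
have := gmono h4; lia.
Qed.

Definition bnd n A := (2*n*#|` A| + 2 + #|` D A| * (#|` D A|).+1 <=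
   2 * #|` Sn n A| + 2*n*n + 2*n*#|` D A|)%N.

Lemma D_sub (A A' : {fset int}) : A' `<=` A -> D A' `<=` D A.
Proof.
move=> s; apply/fsubsetP => x /DP [xA x0 nxA]; apply/DP; split => //; exact: (fsubsetP s).
Qed.

Lemma star_case {n k A z} :
  (forall A', (#|` A'| <= k)%N -> Sn n A' != fset0 -> (#|` D A'| <= n)%N -> bnd n A') ->
  (0 < n)%N -> (#|` A| <= k.+1)%N -> Sn n (A `\ z `\ - z) = fset0 -> Sn n A != fset0 ->
  (#|` D A| <= n)%N -> bnd n A.
Proof.
move=> IH n0 hk emp ne hc.
case: (boolP (D A == fset0)) => hD.
- have ne2 := ne; case/fset0Pn: ne2 => x /SnP [B [sB cB vB _]].
  have sAB : A `<=` B.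
    apply/fsubsetP => y yA; case: (star emp sB cB vB y yA) => // nyB.
    case: (boolP (y \in B)) => // yB; exfalso.
    have nyA := fsubsetP sB _ nyB.
    case: (ltrgtP y 0) => hy.
    + have : - y \in D A by apply/DP; split => //; [rewrite oppr_gt0 | rewrite opprK].
      by rewrite (eqP hD) inE.
    + have : y \in D A by apply/DP; split.
      by rewrite (eqP hD) inE.
    + by move: nyB yB; rewrite hy oppr0 => ->.
  have := fsubset_leq_card sAB; rewrite cB => hk'.
  have : (0 < #|` Sn n A|)%N by rewrite cardfs_gt0.
  rewrite /bnd (eqP hD) cardfs0 => hS.
  have hk3 : (#|` A| <= n)%N := hk'.
  move: (leq_mul (leqnn (2*n)%N) hk3) hS; set K := #|` A|; set S := #|` Sn n A|; clear; lia.
- case: (@exists_extreme (D A) 1 hD) => v vD vmax.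
  have vmax' : forall x, x \in D A -> x <= v by move=> x /vmax; rewrite !mul1r.
  case: (inner_gain emp ne vD vmax') => ne' hg.
  have [vA v0 nvA] := DP _ _ vD.
  have cA : #|` A| = (#|` A `\ - v|).+1 by rewrite (cardfsD1 (- v) A) nvA.
  have sD : D (A `\ - v) `<=` D A `\ v.
    apply/fsubsetP => x /DP [xA x0 nxA]; apply/fsetD1P; split.
    + by apply/eqP => exv; move: nxA; rewrite exv !inE eqxx.
    + by apply/DP; split => //; [move: xA | move: nxA]; move/fsetD1P => [_ ->].
  have cD : (#|` D (A `\ - v)|.+1 <= #|` D A|)%N.
    have := fsubset_leq_card sD; rewrite (cardfsD1 v (D A)) vD; clear; lia.
  have hk2 : (#|` A `\ - v| <= k)%N by move: hk; rewrite cA.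
  have := IH _ hk2 ne' ltac:(clear -cD hc; lia).
  rewrite /bnd cA; apply: ar_inner => //; apply/andP; split => //.
Qed.

Lemma claim n : (0 < n)%N -> forall k (A : {fset int}), (#|` A| <= k)%N -> Sn n A != fset0 ->
  (#|` D A| <= n)%N -> bnd n A.
Proof.
move=> n0; elim=> [|k IH] A hk ne hc.
  exfalso; case/fset0Pn: ne => x /SnP [B [sB cB _ _]].
  move: (fsubset_leq_card sB) hk n0; rewrite cB.
  set K := #|` A|; clear; lia.
have ne2 := ne; case/fset0Pn: ne2 => x0 /SnP [B0 [sB0 cB0 vB0 _]].
have An : A != fset0.
  apply: (fsubset_neq0 sB0); rewrite -cardfs_gt0 cB0 //.
case: (@exists_extreme A 1 An) => w wA wmax.
case: (@exists_extreme A (-1) An) => u uA umax.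
have single : forall z e, z \in A -> - z \notin A `\ z ->
    (forall b, b \in A `\ z -> e * b < e * z) -> bnd n A.
  move=> z e zA nz ext.
  case: (boolP (Sn n (A `\ z) == fset0)) => hS.
  + apply: (star_case (z:=z) IH n0 hk _ ne hc) => //.
    apply/eqP; rewrite -fsubset0 -(eqP hS); apply: Sn_mono; exact: fsubsetDl.
  + have g := outer_gain zA nz ext hS.
    have cA : #|` A| = (#|` A `\ z|).+1 by rewrite (cardfsD1 z A) zA.
    have hk2 : (#|` A `\ z| <= k)%N by move: hk; rewrite cA.
    have cD : (#|` D (A `\ z)| <= #|` D A|)%N.
      by apply: fsubset_leq_card; apply: D_sub; exact: fsubsetDl.
    have := IH _ hk2 hS (leq_trans cD hc).
    rewrite /bnd cA => h; apply: (ar_outer _ g h); apply/andP; split => //.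
case: (boolP (- w \in A `\ w)) => hw; last first.
  apply: (single w 1) => // b /fsetD1P [bw bA]; rewrite !mul1r.
  have := wmax b bA; rewrite !mul1r => h; rewrite lt_neqAle bw h //.
case: (boolP (- u \in A `\ u)) => hu; last first.
  apply: (single u (-1)) => // b /fsetD1P [bu bA]; rewrite !mulN1r ltrN2.
  have := umax b bA; rewrite !mulN1r lerN2 => h; rewrite lt_neqAle eq_sym bu h //.
move/fsetD1P: hw => [nww nwA]; move/fsetD1P: hu => [nuu nuA].
have h1 := umax _ nwA; have h2 := wmax _ nuA.
rewrite !mulN1r !mul1r opprK in h1 h2.
have ew : u = - w by move: h1 h2; clear; lia.
have w0 : 0 < w.
  have := wmax _ uA; rewrite !mul1r ew; move/eqP: nww; clear; lia.
have nwA' : - w \in A by [].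
have ext : forall b, b \in A `\ w `\ - w -> - w < b < w.
  move=> b /fsetD1P [bnw /fsetD1P [bw bA]].
  have := wmax _ bA; have := umax _ bA; rewrite !mulN1r !mul1r ew opprK.
  move/eqP: bnw; move/eqP: bw; clear; move=> *; apply/andP; split; lia.
case: (boolP (Sn n (A `\ w `\ - w) == fset0)) => hS.
  by apply: (star_case IH n0 hk (eqP hS) ne hc).
have g := pair_gain wA w0 nwA' ext hS.
have cA : #|` A| = (#|` A `\ w `\ - w|).+2.
  have hw' : - w \in A `\ w by apply/fsetD1P.
  by rewrite (cardfsD1 w A) wA (cardfsD1 (- w) (A `\ w)) hw'.
have hk2 : (#|` A `\ w `\ - w| <= k)%N by move: hk; rewrite cA; clear; lia.
have sD : D (A `\ w `\ - w) `<=` D A `\ w.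
  apply/fsubsetP => x /DP [xA x0' nxA]; apply/fsetD1P; split.
  + by apply/eqP => exv; move: xA; rewrite exv !inE eqxx andbF.
  + apply/DP; split => //.
    * by move: xA; move/fsetD1P => [_ /fsetD1P [_ ->]].
    * by move: nxA; move/fsetD1P => [_ /fsetD1P [_ ->]].
have wD : w \in D A by apply/DP; split.
have cD : (#|` D (A `\ w `\ - w)|.+1 <= #|` D A|)%N.
  have := fsubset_leq_card sD; rewrite (cardfsD1 w (D A)) wD; clear; lia.
have := IH _ hk2 hS ltac:(clear -cD hc; lia).
rewrite /bnd cA => h; apply: (ar_pair _ g h); apply/andP; split => //.
Qed.

Lemma bin2_2 n : ('C(n, 2) * 2 = n * (n - 1))%N.
Proof.
elim: n => [//|n IH]; rewrite binS bin1 mulnDl IH.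
case: n IH => [//|n] _; rewrite !subSS subn0; lia.
Qed.

Theorem lemma3p1 (n k : nat) (A : {fset int}) :
  (2 < n)%N -> (2 * n - 1 <= k)%N -> #|` A| = k ->
  (#|` Sn n A|%:Z = (k%:Z - 1) * n%:Z - 3 * ('C(n, 2))%:Z + 1)%R ->
  (n - 1 <= #|` [fset a in A | (a < 0)%R]|)%N /\
  (n - 1 <= #|` [fset a in A | (0 < a)%R]|)%N.
Proof.
move=> n2 hk cA hS.
have b2 := bin2_2 n.
move: hS; set S := #|` Sn n A|; set C := 'C(n, 2) => hS.
have hS' : (S + 3 * C = (k - 1) * n + 1)%N.
  have k1 : (1 <= k)%N by clear -n2 hk; lia.
  have e1 : (k%:Z - 1 = (k - 1)%N%:Z)%R by rewrite subzn.
  rewrite e1 -PoszM in hS.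
  clear -hS k1; lia.
have kn : (2 * (n - 1) * n <= (k - 1) * n)%N.
  apply: leq_mul => //; clear -hk n2; lia.
have ne : Sn n A != fset0.
  rewrite -cardfs_gt0 -/S.
  have b2' : (C * 2 = (n - 1) * n)%N by rewrite b2 mulnC.
  have kn' : (2 * ((n - 1) * n) <= (k - 1) * n)%N by rewrite mulnA.
  move: hS' b2' kn'; generalize ((n - 1) * n)%N ((k - 1) * n)%N => M P.
  clear; lia.
have hc : (n - 1 <= #|` D A|)%N.
  case: (leqP (n - 1) #|` D A|) => // lt; exfalso.
  have := @claim n ltac:(clear -n2; lia) k A ltac:(by rewrite cA) ne ltac:(clear -lt; lia).
  rewrite /bnd cA -/S; set c := #|` D A|.
  have [d ed] : exists d, n = (c + d + 2)%N by exists (n - c - 2)%N; clear -lt n2; lia.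
  have k1 : (1 <= k)%N by clear -n2 hk; lia.
  have e1 : ((k - 1) * n + n = k * n)%N by clear -k1; nia.
  have e2 : (n * (n - 1) + n = n * n)%N by clear -n2; nia.
  have e3 : (n * n + c * c + c = 2 * n * c + n + (d + 2) * (d + 1))%N.
    rewrite ed; clear; nia.
  have e4 : (2 <= (d + 2) * (d + 1))%N by clear; nia.
  rewrite mulnS; move: hS' b2 e1 e2 e3 e4; clear; lia.
split.
- apply: leq_trans hc _.
  have -> : #|` D A| = #|` (fun x => - x) @` D A|.
    by rewrite [RHS]card_imfset //; exact: oppr_inj.
  apply: fsubset_leq_card; apply/fsubsetP => y /imfsetP [x /= /DP [xA x0 nxA] ->].
  by rewrite !inE nxA /= oppr_lt0.
- apply: leq_trans hc _; apply: fsubset_leq_card; apply/fsubsetP => x /DP [xA x0 nxA].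
  by rewrite !inE xA.
Qed.
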